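(* Let $\Omega$ be a topological signature, let $A$ be a profinite $\Omega$-algebra, and let $\theta$ be a closed congruence on $A$ such that the quotient space $A/\theta$ is 0-dimensional. Then $\theta$ is a profinite congruence, i.e., the quotient topological algebra $A/\theta$ is profinite.
   Context: A signature is a disjoint union $\Omega=\biguplus_{n\in\mathbb{N}}\Omega_n$; it is topological if each $\Omega_n$ is a topological space. An $\Omega$-algebra is a set $A$ with evaluation maps $E_n^A:\Omega_n\times A^n\to A$; it is a topological $\Omega$-algebra if $A$ is a topological space and each $E_n^A$ is continuous. Compact spaces are required to be Hausdorff. A topological algebra is profinite if it is compact and residually finite, i.e. for any two distinct elements there is a continuous homomorphism into a finite discrete topological $\Omega$-algebra separating them. A congruence $\theta$ is closed if it is a closed subset of $A\times A$; the quotient $A/\theta$ carries the quotient topology and the induced operations. A congruence is called profinite if the quotient topological algebra $A/\theta$ is profinite. *)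

(* Defs.v *)
From HB Require Import structures.
From mathcomp Require Import all_boot all_order all_algebra.
From mathcomp Require Import all_classical all_reals all_analysis.
From mathcomp Require Import generic_quotient.

Set Implicit Arguments.
Unset Strict Implicit.
Unset Printing Implicit Defensive.

Local Open Scope classical_set_scope.
Local Open Scope quotient_scope.

Section TopAlg.

Variable Omega : nat -> topologicalType.

(* Evaluation maps E_n : Omega_n x A^n -> A (A^n is represented as 'I_n -> A, with the product topology {ptws 'I_n -> A}). *)
Definition ops (A : Type) := forall n : nat, Omega n -> ('I_n -> A) -> A.

Definition top_alg (A : topologicalType) (E : ops A) : Prop :=
  forall n : nat, continuous (fun p : Omega n * {ptws 'I_n -> A} => E n p.1 p.2).

Definition is_hom (A B : Type) (EA : ops A) (EB : ops B) (h : A -> B) : Prop :=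
  forall n (w : Omega n) (a : 'I_n -> A), h (EA n w a) = EB n w (h \o a).

Definition finite_discrete_alg (F : topologicalType) (EF : ops F) : Prop :=
  [/\ finite_set [set: F], (forall U : set F, open U) & top_alg EF].

Definition residually_finite (A : topologicalType) (E : ops A) : Prop :=
  forall x y : A, x <> y ->
    exists (F : topologicalType) (EF : ops F), finite_discrete_alg EF /\
      exists h : A -> F, [/\ continuous h, is_hom E EF h & h x <> h y].

(* Profinite topological Omega-algebra: a topological algebra which is
   compact (compact spaces being Hausdorff by convention) and residually finite. *)
Definition profinite (A : topologicalType) (E : ops A) : Prop :=
  [/\ top_alg E, compact [set: A], hausdorff_space A & residually_finite E].

Record congruence (A : Type) (E : ops A) (theta : set (A * A)) : Prop := {
  cong_refl : forall x, theta (x, x);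
  cong_sym : forall x y, theta (x, y) -> theta (y, x);
  cong_trans : forall x y z, theta (x, y) -> theta (y, z) -> theta (x, z);
  cong_compat : forall n (w : Omega n) (a b : 'I_n -> A),
      (forall i, theta (a i, b i)) -> theta (E n w a, E n w b)
}.

Section Quotient.
Variables (A : topologicalType) (E : ops A) (theta : set (A * A)).
Hypothesis Hth : congruence E theta.

Definition theta_rel : rel A := fun x y => `[< theta (x, y) >].

Lemma theta_rel_refl : reflexive theta_rel.
Proof. by move=> x; apply/asboolP; exact: (cong_refl Hth). Qed.
Lemma theta_rel_sym : symmetric theta_rel.
Proof.
by move=> x y; apply/asboolP/asboolP; exact: (cong_sym Hth).
Qed.
Lemma theta_rel_trans : transitive theta_rel.
Proof.
by move=> y x z /asboolP H1 /asboolP H2; apply/asboolP; exact: (cong_trans Hth H1 H2).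
Qed.

Definition theta_equiv : equiv_rel A :=
  EquivRel theta_rel theta_rel_refl theta_rel_sym theta_rel_trans.

Definition quot_space : topologicalType :=
  quotient_topology {eq_quot theta_equiv}.

(* The induced operations on A/theta (well defined since theta is a congruence). *)
Definition quot_ops : ops quot_space :=
  fun n w q => \pi_(quot_space) (@E n w (fun i => repr (q i))).

End Quotient.

End TopAlg.

Definition zero_dim (T : topologicalType) : Prop :=
  forall (x : T) (U : set T), nbhs x U ->
    exists V : set T, [/\ clopen V, V x & V `<=` U].

Arguments quot_ops {Omega A E theta} Hth : rename.
Arguments quot_space {Omega A E theta} Hth.

(* Main.v *)
Require Import Defs.
From mathcomp Require Import all_boot all_order all_algebra.
From mathcomp Require Import all_classical all_reals all_analysis generic_quotient.
From mathcomp Require Import finmap.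

Set Implicit Arguments.
Unset Strict Implicit.
Unset Printing Implicit Defensive.
Local Open Scope classical_set_scope.

Inductive rtc (T : Type) (R : T -> T -> Prop) : T -> T -> Prop :=
| rtc_refl x : rtc R x x
| rtc_step x y z : R x y -> rtc R y z -> rtc R x z.

Lemma rtc_trans T (R : T -> T -> Prop) x y z : rtc R x y -> rtc R y z -> rtc R x z.
Proof. by elim=> // a b c Rab _ IH /IH; apply: rtc_step. Qed.

Lemma rtc_sym T (R : T -> T -> Prop) : (forall x y, R x y -> R y x) ->
  forall x y, rtc R x y -> rtc R y x.
Proof.
move=> Rs x y; elim=> [a|a b c Rab _ IH]; first exact: rtc_refl.
apply: rtc_trans IH _; apply: rtc_step (Rs _ _ Rab) (rtc_refl _ _).
Qed.

Lemma cover_of_compact (T : topologicalType) (K : set T) : compact K -> cover_compact K.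
Proof.
move=> cK I D f fo cov.
apply: contrapT => nfin.
pose G := filter_from (fun D' : {fset I} => {subset D' <= D})
   (fun D' => K `\` cover [set` D'] f).
have GF : ProperFilter G.
  apply: filter_from_proper.
    apply: filter_from_filter.
      by exists fset0 => i; rewrite inE.
    move=> D1 D2 s1 s2; exists (D1 `|` D2)%fset.
      by move=> i; rewrite inE => /orP[/s1|/s2].
    move=> x [Kx nc]; split; split => // -[i /= iD fxi]; apply: nc;
      by exists i => //=; rewrite inE iD ?orbT.
  move=> D' sD'; apply: contrapT => /set0P/negP; rewrite negbK => /eqP e.
  apply: nfin; exists D' => // x Kx; apply: contrapT => nc.
  by have : (K `\` cover [set` D'] f) x by []; rewrite e.
have KG : G K by exists fset0; [move=> i; rewrite inE | move=> x []].
have [p [Kp clp]] := cK G GF KG.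
have [i Di fip] := cov p Kp.
have G1 : G (K `\` f i).
  exists [fset i]%fset; first by move=> j; rewrite inE => /eqP ->; exact/mem_set.
  move=> x [Kx nc]; split => // fxi; apply: nc; exists i => //=.
  by rewrite inE.
have nb : nbhs p (f i) by apply: open_nbhs_nbhs; split => //; exact: fo.
have [y [[_ nfy] fy]] := clp _ _ G1 nb.
exact: nfy fy.
Qed.

Section Proof.
Variables (Omega : nat -> topologicalType) (A : topologicalType) (E : ops Omega A).

Definition upd n (a : 'I_n -> A) (j : 'I_n) (x : A) : 'I_n -> A :=
  fun i => if i == j then x else a i.

Lemma rtc_compat (R : A -> A -> Prop) :
  (forall n (w : Omega n) (a : 'I_n -> A) j x y, R x y ->
     R (E w (upd a j x)) (E w (upd a j y))) ->
  forall n (w : Omega n) (a b : 'I_n -> A), (forall i, rtc R (a i) (b i)) ->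
  rtc R (E w a) (E w b).
Proof.
move=> R1 n w a b ab.
have H1 : forall (c : 'I_n -> A) j x y, rtc R x y ->
    rtc R (E w (upd c j x)) (E w (upd c j y)).
  move=> c j x y; elim=> [z|x1 y1 z1 Rxy _ IH]; first exact: rtc_refl.
  exact: rtc_step (R1 _ _ _ _ _ _ Rxy) IH.
pose c k := fun i : 'I_n => if (i < k)%N then b i else a i.
suff: forall k, (k <= n)%N -> rtc R (E w a) (E w (c k)).
  move/(_ n (leqnn n)); congr (rtc R _ (E w _)); apply: funext => i.
  by rewrite /c ltn_ord.
elim=> [_|k IH kn].
  by rewrite (_ : c 0%N = a); [exact: rtc_refl | apply: funext].
apply: rtc_trans (IH (ltnW kn)) _.
pose j := Ordinal kn.
have -> : c k = upd (c k) j (a j).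
  apply: funext => i; rewrite /upd /c; case: (eqVneq i j) => [->|//].
  by rewrite /= ltnn.
have -> : c k.+1 = upd (c k) j (b j).
  apply: funext => i; rewrite /upd /c; case: (eqVneq i j) => [->|ij].
    by rewrite /= ltnSn.
  rewrite ltnS leq_eqVlt.
  have -> : (nat_of_ord i == k) = false.
    by apply/negP => /eqP ik; move/eqP: ij; apply; apply: val_inj.
  done.
exact: H1.
Qed.


Definition good (k : set (A * A)) :=
  [/\ congruence E k, (forall a, open [set b | k (a, b)]) & open (~` k)].

Lemma kernel_good (F : topologicalType) (EF : ops Omega F) (h : A -> F) :
  finite_discrete_alg EF -> continuous h -> is_hom E EF h ->
  good [set p | h p.1 = h p.2].
Proof.
move=> [_ opn _] hc hh; split.
- split => //=.
  + by move=> x y z -> ->.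
  + move=> n w a b ab; rewrite !hh; congr (EF n w _); apply: funext => i /=.
    exact: ab.
- move=> a; have -> : [set b | h (a, b).1 = h (a, b).2] = h @^-1` [set y | h a = y].
    by [].
  by apply: open_comp => // x _; exact: hc.
- rewrite openE => p /= hp.
  have n1 : nbhs p.1 (h @^-1` [set h p.1]).
    by apply: hc; apply: open_nbhs_nbhs; split => //; exact: opn.
  have n2 : nbhs p.2 (h @^-1` [set h p.2]).
    by apply: hc; apply: open_nbhs_nbhs; split => //; exact: opn.
  exists (h @^-1` [set h p.1], h @^-1` [set h p.2]) => //=.
  by move=> [x y] /= [-> ->].
Qed.


Hypothesis Acpt : compact [set: A].
Hypothesis Ares : residually_finite E.

Lemma keyK (theta : set (A * A)) (Hth : congruence E theta) (C : set A) :
  open C -> closed C -> (forall a b, theta (a, b) -> C a -> C b) ->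
  exists sigma : set (A * A),
    [/\ congruence E sigma, (forall p, theta p -> sigma p),
        (forall a b, sigma (a, b) -> C a -> C b) &
        (forall a, open [set b | sigma (a, b)])].
Proof.
move=> oC cC HC.
have cD : compact (C `*` ~` C).
  by apply: compact_setX; apply: (subclosed_compact _ Acpt) => //;
    exact: open_closedC.
have cD2 : cover_compact (C `*` ~` C) by exact: cover_of_compact.
move: (cD2 _ good (fun k => ~` k)).
case.
- by move=> k [].
- move=> [x y] /= [Cx nCy].
  have xy : x <> y by move=> e; apply: nCy; rewrite -e.
  have [F [EF [fin [h [hc hh hxy]]]]] := Ares xy.
  by exists [set p | h p.1 = h p.2]; first exact: (kernel_good fin).
move=> D' sD' cov.
pose kap := fun p => forall k, k \in D' -> k p.
have gk : forall k, k \in D' -> good k.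
  by move=> k kD; exact: set_mem (sD' k kD).
have kc : congruence E kap.
  split.
  - by move=> x k /gk [[r _ _ _] _ _]; exact: r.
  - by move=> x y H k kD; have [[_ s _ _] _ _] := gk k kD; apply: s; exact: H.
  - move=> x y z H1 H2 k kD; have [[_ _ t _] _ _] := gk k kD.
    by apply: t; [exact: H1|exact: H2].
  - move=> n w a b H k kD; have [[_ _ _ c] _ _] := gk k kD.
    by apply: c => i; exact: H.
have ksat : forall a b, kap (a, b) -> C a -> C b.
  move=> a b kab Ca; have [//|nCb] := pselect (C b).
  have [k kD /= nk] := cov (a, b) (conj Ca nCb).
  by exfalso; apply: nk; exact: kab.
have kopen : forall a, open [set b | kap (a, b)].
  move=> a; rewrite openE => b kab.
  have : nbhs b (\bigcap_(k in [set` D']) [set b' | k (a, b')]).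
    apply: filter_bigI => k kD; apply: open_nbhs_nbhs; split.
      by case: (gk k kD).
    exact: kab.
  by apply: filterS => b' H k kD; exact: H k kD.
pose R x y := theta (x, y) \/ kap (x, y).
exists (fun p : A * A => rtc R p.1 p.2); split.
- split.
  + by move=> x; exact: rtc_refl.
  + move=> x y; apply: rtc_sym => u v [t|t].
      by left; exact: (cong_sym Hth t).
    by right; exact: (cong_sym kc t).
  + by move=> x y z; exact: rtc_trans.
  + move=> n w a b; apply: rtc_compat => m w' c j x y [t|t].
      by left; apply: (cong_compat Hth) => i; rewrite /upd; case: eqP => _ //;
        exact: (cong_refl Hth).
    by right; apply: (cong_compat kc) => i; rewrite /upd; case: eqP => _ //;
        exact: (cong_refl kc).
- by move=> [x y] t; apply: rtc_step (rtc_refl _ _); left.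
- move=> a b /=; elim => // x y z [t|t] _ IH Cx; apply: IH.
    exact: HC t Cx.
  exact: ksat t Cx.
- move=> a; rewrite openE => b sab; have := kopen b; rewrite openE.
  move=> /(_ b (cong_refl kc b)).
  apply: filterS => b' kbb'; apply: rtc_trans sab _.
  by apply: rtc_step (rtc_refl _ _); right.
Qed.

End Proof.

Local Open Scope quotient_scope.

Lemma pieqQ (Om : nat -> topologicalType) (T : topologicalType) (E : ops Om T)
  (th : set (T * T)) (Hc : congruence E th) (a b : T) :
  (\pi_(quot_space Hc) a = \pi_(quot_space Hc) b) <-> th (a, b).
Proof. by split => [/eqmodP/asboolP // | H]; apply/eqmodP/asboolP. Qed.

Lemma pieqF (Om : nat -> topologicalType) (T : topologicalType) (E : ops Om T)
  (th : set (T * T)) (Hc : congruence E th) (a b : T) :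
  (\pi_({eq_quot theta_equiv Hc}) a = \pi b) <-> th (a, b).
Proof. by split => [/eqmodP/asboolP // | H]; apply/eqmodP/asboolP. Qed.

Lemma reprQ (Om : nat -> topologicalType) (T : topologicalType) (E : ops Om T)
  (th : set (T * T)) (Hc : congruence E th) (a : T) :
  th (repr (\pi_(quot_space Hc) a), a).
Proof. by apply/(pieqQ Hc); rewrite reprK. Qed.

Lemma reprF (Om : nat -> topologicalType) (T : topologicalType) (E : ops Om T)
  (th : set (T * T)) (Hc : congruence E th) (a : T) :
  th (repr (\pi_({eq_quot theta_equiv Hc}) a), a).
Proof. by apply/(pieqF Hc); rewrite reprK. Qed.

Theorem theorem2p8 (Omega : nat -> topologicalType) (A : topologicalType)
  (E : ops Omega A) (HA : profinite E)
  (theta : set (A * A)) (Hth : congruence E theta)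
  (Hclosed : closed theta)
  (H0 : zero_dim (quot_space Hth)) :
  profinite (quot_ops Hth).
Proof.
case: HA => ta Acpt Ahs Ares.
pose Q := quot_space Hth.
pose pi := \pi_Q : A -> Q.
have T1 : forall y : Q, open (~` [set y]).
  move=> y; change (open (pi @^-1` (~` [set y]))).
  rewrite openE => a /= ay.
  have nth : ~ theta (a, repr y).
    by move/(pieqQ Hth); rewrite reprK.
  have : nbhs (a, repr y) (~` theta) by apply: open_nbhs_nbhs; split => //;
    exact: closed_openC.
  case=> -[X Y] /= [nX nY] sub.
  apply: filterS nX => a' Xa' e; apply: (sub (a', repr y)).
    by split => //; exact: nbhs_singleton.
  by apply/(pieqQ Hth); rewrite reprK.
have SEP : forall x y : Q, x <> y -> exists C : set Q, [/\ clopen C, C x & ~ C y].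
  move=> x y xy.
  have [C [cC Cx Cs]] := H0 x (~` [set y]) (open_nbhs_nbhs (conj (T1 y) xy)).
  by exists C; split => // Cy; exact: Cs Cy erefl.
have CL : forall C : set Q, clopen C ->
    [/\ open (pi @^-1` C), closed (pi @^-1` C) &
        forall a b, theta (a, b) -> (pi @^-1` C) a -> (pi @^-1` C) b].
  move=> C [oC cC]; split.
  - exact: oC.
  - rewrite -openC preimage_setC; exact: (closed_openC cC).
  - by move=> a b /(pieqQ Hth) e; rewrite /preimage /= /pi -e.
split.
- move=> n [w q] V nV.
  have [C [[oC cC] Cv CV]] := H0 _ _ nV.
  have [oC' cC' sC'] := CL C (conj oC cC).
  have [sigma [sc sth ssat sop]] := keyK Acpt Ares Hth oC' cC' sC'.
  pose a := fun i => repr (q i).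
  have nE : nbhs (E n w a) [set b | sigma (E n w a, b)].
    by apply: open_nbhs_nbhs; split; [exact: sop | exact: (cong_refl sc)].
  have := ta n (w, a) _ nE.
  case=> -[W N] /= [nW nN] sub.
  exists (W, [set q' : {ptws 'I_n -> Q} | forall i, sigma (a i, repr (q' i))]).
    split => //=.
    suff Hi : forall i, nbhs q (fun q0 : {ptws 'I_n -> Q} => sigma (a i, repr (q0 i))).
      exact: (filter_forall _ Hi).
    move=> i.
    have Oi : open [set z : Q | sigma (a i, repr z)].
      change (open (pi @^-1` [set z : Q | sigma (a i, repr z)])).
      rewrite openE => b /= sb.
      have sb' : sigma (a i, b).
        exact: (cong_trans sc sb (sth _ (reprQ Hth b))).
      have := sop (a i); rewrite openE => /(_ b sb').
      apply: filterS => b' /= sb2.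
      apply: (cong_trans sc sb2); apply: sth; apply: (cong_sym Hth).
      exact: reprQ.
    exact: (@proj_continuous _ (fun=> Q) i q _
      (open_nbhs_nbhs (conj Oi (cong_refl sc _)))).
  move=> [w' q'] /= [Ww' Oq']; apply: CV.
  have s1 : sigma (E n w a, E n w' a) := sub (w', a) (conj Ww' (nbhs_singleton nN)).
  have s2 : sigma (E n w' a, E n w' (fun i => repr (q' i))).
    exact: (cong_compat sc w' Oq').
  exact: (ssat _ _ (cong_trans sc s1 s2) Cv).
- have -> : [set: Q] = pi @` [set: A].
    by apply/seteqP; split => // q _; exists (repr q) => //; rewrite /pi reprK.
  apply: continuous_compact => //; apply: continuous_subspaceT.
  exact: pi_continuous.
- rewrite open_hausdorff => x y /eqP xy.
  have [C [[oC cC] Cx nCy]] := SEP x y xy.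
  exists (C, ~` C); first by split; apply/mem_set.
  split => //; first by rewrite openC.
  by rewrite setICr.
- move=> x y xy.
  have [C [[oC cC] Cx nCy]] := SEP x y xy.
  have [oC' cC' sC'] := CL C (conj oC cC).
  have [sigma [sc sth ssat sop]] := keyK Acpt Ares Hth oC' cC' sC'.
  have cA : cover_compact [set: A] by exact: cover_of_compact.
  have [S _ Scov] : finite_subset_cover [set: A] (fun a => [set b | sigma (a, b)]) [set: A].
    apply: cA => [a _|b _]; first exact: sop.
    by exists b => //; exact: (cong_refl sc).
  pose Fq := {eq_quot theta_equiv sc}.
  pose F : topologicalType := discrete_topology Fq.
  pose EF : ops Omega F := fun n w f => (\pi_Fq (E n w (fun i => repr (f i : Fq))) : F).
  exists F, EF; split.
    split.
    + apply: (@sub_finite_set _ _ ((fun a => \pi_Fq a : F) @` [set` S])); last first.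
        exact/finite_image/finite_fset.
      move=> z _; have [a aS saz] := Scov (repr (z : Fq)) I.
      exists a => //; rewrite -[RHS]reprK; exact/(pieqF sc).
    + by move=> U; exact: discrete_open.
    + move=> n [w f] V nV.
      have Vv := nbhs_singleton nV.
      pose a := fun i => repr (f i : Fq).
      have nE : nbhs (E n w a) [set b | sigma (E n w a, b)].
        by apply: open_nbhs_nbhs; split; [exact: sop | exact: (cong_refl sc)].
      have := ta n (w, a) _ nE.
      case=> -[W N] /= [nW nN] sub.
      exists (W, [set f]).
        split => //=.
        suff Hi : forall i, nbhs f (fun g : {ptws 'I_n -> F} => g i = f i).
          have -> : [set f] = [set g : {ptws 'I_n -> F} | forall i, g i = f i].
            by apply/seteqP; split => g /= H; [rewrite H | apply: funext].
          exact: (filter_forall _ Hi).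
        by move=> i; exact: (@proj_continuous _ (fun=> F) i f _ (discrete_set1 (f i))).
      move=> [w' g] /= [Ww' ->].
      suff -> : EF n w' f = EF n w f by [].
      apply/(pieqF sc); apply: (cong_sym sc).
      exact: sub (w', a) (conj Ww' (nbhs_singleton nN)).
  exists (fun q : Q => (\pi_Fq (repr q) : F)); split.
  + apply/quotient_continuous => a V nV.
    have Vv := nbhs_singleton nV.
    apply: filterS (open_nbhs_nbhs (conj (sop a) (cong_refl sc a))) => b sab /=.
    suff -> : \pi_Fq (repr (\pi_Q b)) = \pi_Fq (repr (\pi_Q a)) by [].
    apply/(pieqF sc).
    apply: (cong_trans sc (sth _ (reprQ Hth b))).
    apply: (cong_trans sc (cong_sym sc sab)).
    by apply: sth; apply: (cong_sym Hth); exact: reprQ.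
  + move=> n w q; rewrite /quot_ops /EF /=.
    apply/(pieqF sc); apply: (cong_trans sc (sth _ (reprQ Hth _))).
    apply: (cong_compat sc) => i; apply: (cong_sym sc); exact: (reprF sc).
  + move=> /(pieqF sc) sxy; apply: nCy.
    have := ssat _ _ sxy; rewrite /preimage /= /pi !reprK; exact.
Qed.
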